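(* If $(x,y)$ and $(x,y')$ are both $\mathbf{x}$-vertices of $S$, then $d_S((x,y),(x,y'))\le d(\bar B)$.
   Context: Let $A\in\mathbb{R}^{m_1\times n_1}$, $a_1,a_2\in\mathbb{R}^{1\times n_1}$, $b_1,b_2\in\mathbb{R}^{1\times n_2}$, $B\in\mathbb{R}^{m_2\times n_2}$, $c_A\in\mathbb{R}^{m_1}$, $c_B\in\mathbb{R}^{m_2}$, and scalars $c_a^1,c_a^2,c_b^1,c_b^2$. Consider the ($3$-sum) polyhedron $S=\{(x,y)\in\mathbb{R}^{n_1}\times\mathbb{R}^{n_2}: Ax=c_A,\ a_1x+b_1y=c_a^1+c_b^1,\ a_2x+b_2y=c_a^2+c_b^2,\ By=c_B,\ x,y\ge 0\}$, assumed simple (nondegenerate). Let $P_A=\{x: Ax=c_A, x\ge 0\}$ and $\bar B=\begin{bmatrix}b_1\\ b_2\\ B\end{bmatrix}$. A vertex $(x,y)$ of $S$ is an $\mathbf{x}$-vertex if $x$ is a vertex of $P_A$. $d_S(v,w)$ is the minimum number of edges of an edge walk in $S$ from $v$ to $w$. For a polyhedron $P$, $d(P)$ is its combinatorial diameter, and for a matrix $M\in\mathbb{R}^{m\times n}$, $d(M):=\max\{d(\{z: Mz=r, z\ge 0\}): r\in\mathbb{R}^m\}$. *)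

(* Defs.v *)
From HB Require Import structures.
From mathcomp Require Import all_boot all_order all_algebra.
Set Implicit Arguments. Unset Strict Implicit. Unset Printing Implicit Defensive.
Import Order.TTheory GRing.Theory Num.Theory.
Local Open Scope ring_scope.

Section Polyhedra.
Variable R : realFieldType.

Definition polyStd (m n : nat) (M : 'M[R]_(m, n)) (r : 'cV[R]_m) : 'cV[R]_n -> Prop :=
  fun z => M *m z = r /\ (forall i, 0 <= z i ord0).

Variable n : nat.
Implicit Types (P : 'cV[R]_n -> Prop) (v w p q : 'cV[R]_n).

Definition is_vertex P v : Prop :=
  P v /\ forall p q (t : R), P p -> P q -> 0 < t < 1 ->
          v = t *: p + (1 - t) *: q -> p = q.

Definition segment v w : 'cV[R]_n -> Prop :=
  fun z => exists t : R, 0 <= t <= 1 /\ z = t *: v + (1 - t) *: w.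

(* v, w adjacent: distinct vertices whose segment conv{v,w} is a face of P
   (extreme subset), i.e. an edge (1-dimensional face) of P. *)
Definition adjacent P v w : Prop :=
  [/\ is_vertex P v, is_vertex P w, v <> w &
      forall p q (t : R), P p -> P q -> 0 < t < 1 ->
        segment v w (t *: p + (1 - t) *: q) -> segment v w p /\ segment v w q].

Definition walk_dist_le P v w (k : nat) : Prop :=
  exists (l : nat) (f : nat -> 'cV[R]_n),
    [/\ (l <= k)%N, f 0%N = v, f l = w &
        forall i, (i < l)%N -> adjacent P (f i) (f i.+1)].

Definition diam_le P (D : nat) : Prop :=
  forall v w, is_vertex P v -> is_vertex P w -> walk_dist_le P v w D.

Definition std_nondegenerate (m : nat) (M : 'M[R]_(m, n)) (r : 'cV[R]_m) : Prop :=
  forall z, is_vertex (polyStd M r) z -> #|[set i | z i ord0 != 0]| = \rank M.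
End Polyhedra.

Definition matdiam_le (R : realFieldType) (m n : nat) (M : 'M[R]_(m, n)) (D : nat) :=
  forall r : 'cV[R]_m, diam_le (polyStd M r) D.

Section ThreeSum.
Variables (R : realFieldType) (m1 n1 m2 n2 : nat).
Variables (A : 'M[R]_(m1, n1)) (a1 a2 : 'rV[R]_n1) (b1 b2 : 'rV[R]_n2)
          (B : 'M[R]_(m2, n2)) (cA : 'cV[R]_m1) (cB : 'cV[R]_m2)
          (ca1 ca2 cb1 cb2 : R).

(* Constraint matrix of S, acting on z = col_mx x y:
     [ A  0  ]
     [ a1 b1 ]
     [ a2 b2 ]
     [ 0  B  ] *)
Definition threesum_mx : 'M[R]_(m1 + (1 + (1 + m2)), n1 + n2) :=
  col_mx (row_mx A 0)
    (col_mx (row_mx a1 b1) (col_mx (row_mx a2 b2) (row_mx 0 B))).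

Definition threesum_rhs : 'cV[R]_(m1 + (1 + (1 + m2))) :=
  col_mx cA (col_mx (ca1 + cb1)%:M (col_mx (ca2 + cb2)%:M cB)).

Definition S3 := polyStd threesum_mx threesum_rhs.

Definition Bbar : 'M[R]_(1 + (1 + m2), n2) := col_mx b1 (col_mx b2 B).

Definition is_xvertex (x : 'cV[R]_n1) (y : 'cV[R]_n2) : Prop :=
  is_vertex S3 (col_mx x y) /\ is_vertex (polyStd A cA) x.
End ThreeSum.

(* Main.v *)
Require Import Defs.
From mathcomp Require Import all_boot all_order all_algebra.
Local Open Scope ring_scope.

Set Implicit Arguments. Unset Strict Implicit. Unset Printing Implicit Defensive.
Import Order.TTheory GRing.Theory Num.Theory.

Section Aux.
Variables (R : realFieldType) (m1 n1 m2 n2 : nat).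
Variables (A : 'M[R]_(m1, n1)) (a1 a2 : 'rV[R]_n1) (b1 b2 : 'rV[R]_n2)
          (B : 'M[R]_(m2, n2)) (cA : 'cV[R]_m1) (cB : 'cV[R]_m2)
          (ca1 ca2 cb1 cb2 : R).

Definition rQ (x : 'cV[R]_n1) : 'cV[R]_(1 + (1 + m2)) :=
  col_mx ((ca1+cb1)%:M - a1 *m x) (col_mx ((ca2+cb2)%:M - a2 *m x) cB).

Lemma nn_col (x : 'cV[R]_n1) (y : 'cV[R]_n2) :
  (forall i, 0 <= col_mx x y i ord0) <->
  (forall i, 0 <= x i ord0) /\ (forall i, 0 <= y i ord0).
Proof.
split.
  move=> h; split=> i.
    by have := h (lshift n2 i); rewrite col_mxEu.
  by have := h (rshift n1 i); rewrite col_mxEd.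
case=> h1 h2 i; rewrite -(splitK i); case: (split i) => j /=.
  by rewrite col_mxEu.
by rewrite col_mxEd.
Qed.

Lemma memS (x : 'cV[R]_n1) (y : 'cV[R]_n2) :
  S3 A a1 a2 b1 b2 B cA cB ca1 ca2 cb1 cb2 (col_mx x y) <->
  polyStd A cA x /\ polyStd (Bbar b1 b2 B) (rQ x) y.
Proof.
rewrite /S3 /polyStd /threesum_mx /threesum_rhs /Bbar /rQ.
rewrite !mul_col_mx !mul_row_col !mul0mx add0r addr0.
split.
  case=> /eq_col_mx [h1 /eq_col_mx [h2 /eq_col_mx [h3 h4]]] /nn_col [hn1 hn2].
  split; split => //.
  by rewrite -h2 -h3 !(addrAC _ _ (- _)) !subrr !add0r h4.
case=> [[h1 hn1] [/eq_col_mx [h2 /eq_col_mx [h3 h4]] hn2]].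
split; last exact/nn_col.
by rewrite h1 h2 h3 h4 !(addrC (_ *m x)) !subrK.
Qed.

Lemma comb_col t (a c : 'cV[R]_n1) (b d : 'cV[R]_n2) :
  t *: col_mx a b + (1 - t) *: col_mx c d =
  col_mx (t *: a + (1 - t) *: c) (t *: b + (1 - t) *: d).
Proof. by rewrite !scale_col_mx add_col_mx. Qed.

Lemma comb_same m t (a : 'cV[R]_m) : t *: a + (1 - t) *: a = a.
Proof. by rewrite -scalerDl addrC subrK scale1r. Qed.

Let S := S3 A a1 a2 b1 b2 B cA cB ca1 ca2 cb1 cb2.
Variable x : 'cV[R]_n1.
Hypothesis hx : is_vertex (polyStd A cA) x.
Let Q := polyStd (Bbar b1 b2 B) (rQ x).

Lemma Sdec z : S z -> polyStd A cA (usubmx z) /\ polyStd (Bbar b1 b2 B) (rQ (usubmx z)) (dsubmx z).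
Proof. by move=> h; apply/memS; rewrite vsubmxK. Qed.

Lemma face p q t : S p -> S q -> 0 < t < 1 ->
  usubmx (t *: p + (1 - t) *: q) = x -> p = col_mx x (dsubmx p) /\ q = col_mx x (dsubmx q).
Proof.
move=> Sp Sq ht e.
have [[Pp _] [Pq _]] := (Sdec Sp, Sdec Sq).
rewrite linearD !linearZ /= in e.
have epq := hx.2 _ _ _ Pp Pq ht (esym e).
have ex : usubmx p = x by rewrite -e -epq comb_same.
by rewrite -{1}(vsubmxK p) -{1}(vsubmxK q) -epq ex.
Qed.

Lemma inQ y : Q y -> S (col_mx x y).
Proof. by move=> h; apply/memS; split => //; exact: hx.1. Qed.

Lemma lift_vertex y : is_vertex Q y -> is_vertex S (col_mx x y).
Proof.
case=> Qy hy; split; first exact: inQ.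
move=> p q t Sp Sq ht e.
have hu : usubmx (t *: p + (1 - t) *: q) = x by rewrite -e col_mxKu.
have [ep eq'] := face Sp Sq ht hu.
move: Sp Sq e; rewrite ep eq' => /memS [_ Qp] /memS [_ Qq].
rewrite comb_col comb_same => /eq_col_mx [_ e].
by rewrite (hy _ _ _ Qp Qq ht e).
Qed.

Lemma proj_vertex y : is_vertex S (col_mx x y) -> is_vertex Q y.
Proof.
case=> Sy hy; split; first by have /memS [] := Sy.
move=> p q t Qp Qq ht e.
have := hy _ _ _ (inQ Qp) (inQ Qq) ht.
rewrite comb_col comb_same -e => /(_ erefl) /eq_col_mx [].
by [].
Qed.

Lemma lift_adj v w : adjacent Q v w -> adjacent S (col_mx x v) (col_mx x w).
Proof.
case=> Vv Vw nvw hf; split.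
- exact: lift_vertex.
- exact: lift_vertex.
- by move=> /eq_col_mx [].
move=> p q t Sp Sq ht [s [hs e]].
have hu : usubmx (t *: p + (1 - t) *: q) = x by rewrite e comb_col comb_same col_mxKu.
have [ep eq'] := face Sp Sq ht hu.
move: Sp Sq e; rewrite ep eq' => /memS [_ Qp] /memS [_ Qq].
rewrite !comb_col !comb_same => /eq_col_mx [_ e].
have [[s1 [h1 e1]] [s2 [h2 e2]]] := hf _ _ _ Qp Qq ht (ex_intro _ s (conj hs e)).
split.
  by exists s1; split => //; rewrite comb_col comb_same -e1.
by exists s2; split => //; rewrite comb_col comb_same -e2.
Qed.
End Aux.

Theorem lemma7 (R : realFieldType) (m1 n1 m2 n2 : nat)
  (A : 'M[R]_(m1, n1)) (a1 a2 : 'rV[R]_n1) (b1 b2 : 'rV[R]_n2)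
  (B : 'M[R]_(m2, n2)) (cA : 'cV[R]_m1) (cB : 'cV[R]_m2)
  (ca1 ca2 cb1 cb2 : R)
  (Hsimple : std_nondegenerate (threesum_mx A a1 a2 b1 b2 B)
                           (threesum_rhs cA cB ca1 ca2 cb1 cb2))
  (x : 'cV[R]_n1) (y y' : 'cV[R]_n2)
  (Hxy : is_xvertex A a1 a2 b1 b2 B cA cB ca1 ca2 cb1 cb2 x y)
  (Hxy' : is_xvertex A a1 a2 b1 b2 B cA cB ca1 ca2 cb1 cb2 x y')
  (D : nat) (HD : matdiam_le (Bbar b1 b2 B) D) :
  walk_dist_le (S3 A a1 a2 b1 b2 B cA cB ca1 ca2 cb1 cb2)
               (col_mx x y) (col_mx x y') D.
Proof.
case: Hxy => Vy Vx; case: Hxy' => Vy' _.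
have := HD (rQ a1 a2 cB ca1 ca2 cb1 cb2 x) y y'
  (proj_vertex Vx Vy) (proj_vertex Vx Vy').
case=> l [f [hl h0 hl' ha]].
exists l, (fun i => col_mx x (f i)); split => //.
- by rewrite h0.
- by rewrite hl'.
by move=> i hi; apply: lift_adj => //; exact: ha.
Qed.
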